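(* Let $t$ be a positive integer and let $\mathcal{P}=\{P_1,\ldots,P_E\}$ be a locally $(2t,2)$-bounded partition of $\mathbb{F}_q^k$ (with this fixed indexing of its blocks). For $u\in\mathbb{F}_q^k$ let $B_{\mathcal{P}}(u,2t)=\{j\in[E]: B(u,2t)\cap P_j\neq\emptyset\}$. Define $\mathcal{C}:\mathbb{F}_q^k\to\mathbb{F}_q^{k+2t}$ by $\mathcal{C}(u)=(u,u_p)$, where, if $u\in P_i$, $u_p=(0,\ldots,0)\in\mathbb{F}_q^{2t}$ when $i=\min B_{\mathcal{P}}(u,2t)$ and $u_p=(1,\ldots,1)\in\mathbb{F}_q^{2t}$ otherwise. Then $\mathcal{C}$ is a $(\mathcal{P},t)$-encoding.
   Context: $B(u,\rho)$ denotes the Hamming ball of radius $\rho$ centered at $u$. A partition $\mathcal{P}=\{P_1,\ldots,P_E\}$ of $\mathbb{F}_q^k$ is locally $(\rho,\lambda)$-bounded if for every $u\in\mathbb{F}_q^k$, $|\{j\in[E]: B(u,\rho)\cap P_j\ne\emptyset\}|\le\lambda$. A $(\mathcal{P},t)$-encoding is a systematic map $\mathcal{C}:\mathbb{F}_q^k\to\mathbb{F}_q^{k+r}$ with $d(\mathcal{C}(u),\mathcal{C}(v))\ge 2t+1$ (Hamming distance) whenever $u,v$ lie in different blocks of $\mathcal{P}$. *)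

(* Defs.v *)
From mathcomp Require Import all_boot all_order all_algebra.
Set Implicit Arguments. Unset Strict Implicit. Unset Printing Implicit Defensive.
Import GRing.Theory.
Local Open Scope ring_scope.

Definition hamming (F : finFieldType) (n : nat) (x y : 'rV[F]_n) : nat :=
  #|[set i : 'I_n | x 0 i != y 0 i]|.

Definition hball (F : finFieldType) (n : nat) (u : 'rV[F]_n) (rho : nat)
  : {set 'rV[F]_n} := [set v | (hamming u v <= rho)%N].

(* A partition P = {P_1,...,P_E} of F^k with fixed indexing is given by the
   block-index map blk : F^k -> 'I_E (P_j = blk^-1 j), with all blocks nonempty. *)
Definition is_partition (F : finFieldType) (k E : nat) (blk : 'rV[F]_k -> 'I_E)
  : Prop := forall j : 'I_E, exists u, blk u = j.

Definition block (F : finFieldType) (k E : nat) (blk : 'rV[F]_k -> 'I_E) (j : 'I_E)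
  : {set 'rV[F]_k} := [set u | blk u == j].

Definition ballP (F : finFieldType) (k E : nat) (blk : 'rV[F]_k -> 'I_E)
  (u : 'rV[F]_k) (rho : nat) : {set 'I_E} :=
  [set j : 'I_E | hball u rho :&: block blk j != set0].

Definition locally_bounded (F : finFieldType) (k E : nat) (blk : 'rV[F]_k -> 'I_E)
  (rho lam : nat) : Prop :=
  forall u : 'rV[F]_k, (#|ballP blk u rho| <= lam)%N.

Definition encoding (F : finFieldType) (k E r : nat) (blk : 'rV[F]_k -> 'I_E)
  (t : nat) (C : 'rV[F]_k -> 'rV[F]_(k + r)) : Prop :=
  (forall u, lsubmx (C u) = u) /\
  (forall u v, blk u != blk v -> (2 * t + 1 <= hamming (C u) (C v))%N).

Definition thm6_code (F : finFieldType) (k E : nat) (blk : 'rV[F]_k -> 'I_E)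
  (t : nat) (u : 'rV[F]_k) : 'rV[F]_(k + 2 * t) :=
  row_mx u (if blk u == [arg min_(j < blk u in ballP blk u (2 * t)) (j : nat)]
            then const_mx 0 else const_mx 1).

(* Main.v *)
Require Import Defs.
From mathcomp Require Import all_boot all_order all_algebra.
Import GRing.Theory.

Section H.
Variable F : finFieldType.
Local Open Scope ring_scope.

Lemma hamming_sum n (x y : 'rV[F]_n) :
  hamming x y = (\sum_(i < n) (x 0%R i != y 0%R i : nat))%N.
Proof.
rewrite /hamming -sum1_card big_mkcond /=; apply: eq_bigr => i _.
by rewrite inE; case: (_ != _).
Qed.

Lemma hamming_row_mx m n (a c : 'rV[F]_m) (b d : 'rV[F]_n) :
  hamming (row_mx a b) (row_mx c d) = (hamming a c + hamming b d)%N.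
Proof.
rewrite !hamming_sum big_split_ord /=.
by congr (_ + _)%N; apply: eq_bigr => i _; rewrite ?row_mxEl ?row_mxEr.
Qed.

Lemma hamming_sym n (x y : 'rV[F]_n) : hamming x y = hamming y x.
Proof. by rewrite !hamming_sum; apply: eq_bigr => i _; rewrite eq_sym. Qed.

Lemma hamming_01 n : hamming (const_mx 0 : 'rV[F]_n) (const_mx 1) = n.
Proof.
rewrite hamming_sum (eq_bigr (fun _ => 1%N)); last first.
  by move=> i _; rewrite !mxE eq_sym oner_eq0.
by rewrite sum1_card card_ord.
Qed.

Lemma hamming_gt0 n (x y : 'rV[F]_n) : x != y -> (0 < hamming x y)%N.
Proof.
move=> nxy; rewrite /hamming card_gt0; apply/set0Pn.
have [i Hi] : exists i, x 0%R i != y 0%R i.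
  apply/existsP; apply: contraR nxy => /existsPn H.
  by apply/eqP/rowP => i; apply/eqP; move: (H i); rewrite negbK.
by exists i; rewrite inE.
Qed.

Lemma in_ballP k E (blk : 'rV[F]_k -> 'I_E) u rho w :
  (hamming u w <= rho)%N -> blk w \in ballP blk u rho.
Proof.
move=> H; rewrite inE; apply/set0Pn; exists w.
by rewrite !inE H eqxx.
Qed.

Lemma two_elems (T : finType) (S : {set T}) a b c :
  a \in S -> b \in S -> a != b -> (#|S| <= 2)%N -> c \in S -> c = a \/ c = b.
Proof.
move=> aS bS ab cS3 cS.
case: (eqVneq c a) => [->|ca]; first by left.
case: (eqVneq c b) => [->|cb]; first by right.
have : [set a; b] \proper S.
  apply/properP; split; first by apply/subsetP=> x; rewrite !inE => /orP[]/eqP->.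
  by exists c => //; rewrite !inE negb_or ca cb.
move/proper_card; rewrite cards2 ab => H.
by move: (leq_trans H cS3); rewrite ltnn.
Qed.

End H.

Theorem theorem6 (F : finFieldType) (k E t : nat) (blk : 'rV[F]_k -> 'I_E) :
  (0 < t)%N ->
  is_partition blk ->
  locally_bounded blk (2 * t) 2 ->
  encoding blk t (thm6_code blk t).
Proof.
move=> t0 _ lb; rewrite /encoding; split=> [u|u v buv]; first by rewrite /thm6_code row_mxKl.
rewrite /thm6_code hamming_row_mx.
have huv : u != v by apply: contraNneq buv => ->.
have [big|small] := leqP (2 * t + 1) (hamming u v).
  exact: leq_trans big (leq_addr _ _).
have small' : (hamming u v <= 2 * t)%N by move: small; rewrite addn1 ltnS.
have small'' : (hamming v u <= 2 * t)%N by rewrite hamming_sym.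
have z : forall w : 'rV[F]_k, (hamming w w <= 2 * t)%N.
  by move=> w; rewrite hamming_sum big1 // => i _; rewrite eqxx.
have key : forall (x y : 'rV[F]_k), (hamming x y <= 2 * t)%N -> blk x != blk y ->
    nat_of_ord [arg min_(j < blk x in ballP blk x (2 * t)) (j : nat)] =
    minn (blk x) (blk y) /\
    ([arg min_(j < blk x in ballP blk x (2 * t)) (j : nat)] = blk x \/
     [arg min_(j < blk x in ballP blk x (2 * t)) (j : nat)] = blk y).
  move=> x y hxy bxy.
  have xS := @in_ballP _ _ _ blk _ _ _ (z x).
  have yS := @in_ballP _ _ _ blk _ _ _ hxy.
  case: arg_minnP => // m mS mmin.
  have mab := @two_elems _ _ _ _ _ xS yS bxy (lb x) mS.
  split=> //.
  have h1 := mmin _ xS; have h2 := mmin _ yS.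
  by case: mab => em; subst m; [rewrite (minn_idPl h2) | rewrite (minn_idPr h1)].
have [e1 o1] := key u v small' buv.
have bvu : blk v != blk u by rewrite eq_sym.
have [e2 o2] := key v u small'' bvu.
move: e1 o1 e2 o2.
set m1 := [arg min_(j < blk u in _) _]; set m2 := [arg min_(j < blk v in _) _].
move=> e1 o1 e2 o2.
have em : m1 = m2 by apply: val_inj; rewrite /= e1 e2 minnC.
rewrite -em.
have hp := @hamming_gt0 _ _ _ _ huv.
rewrite addnC; case: o1 => o1; rewrite o1 eqxx ?(negbTE bvu) ?(negbTE buv).
  by apply: leq_add => //; rewrite hamming_01.
by apply: leq_add => //; rewrite hamming_sym hamming_01.
Qed.
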